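(* Let $h$ be a probability density on $\mathbb R$ satisfying (H1) $h$ is symmetric, positive and decreasing on $[0,\infty)$, and (H2) $\log(1/h(x))\le c_1(1+\log^{1+\kappa}(1+x))$ for all $x\ge0$, for some constants $c_1>0$, $\kappa\ge0$. For $\sigma>0$ let $\pi$ be the law of $\sigma\zeta$ where $\zeta$ has density $h$; let $\theta\sim\pi$ and $X\mid\theta\sim\mathcal N(\theta,1/n)$. Then there is a constant $C>0$ (depending only on $h$) such that for all $n\ge1$, $t\in\mathbb R$, $\theta_0\in\mathbb R$ and $\sigma>0$, $$E_{\theta_0}E^\pi\big[e^{t\sqrt n(\theta-X)}\,\big|\,X\big]\le C\,\sigma\sqrt n\, e^{t^2/2}\exp\Big\{c_1\log^{1+\kappa}\Big(1+\frac{|\theta_0|+1/\sqrt n}{\sigma}\Big)\Big\}.$$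
   Context: $E^\pi[\cdot\mid X]$ denotes expectation under the posterior distribution of $\theta$ given $X$ for prior $\pi$; $E_{\theta_0}$ denotes expectation over $X\sim\mathcal N(\theta_0,1/n)$. *)

(* Defs.v *)
From HB Require Import structures.
From mathcomp Require Import all_boot all_order all_algebra.
From mathcomp Require Import all_classical all_reals all_analysis.
Set Implicit Arguments. Unset Strict Implicit. Unset Printing Implicit Defensive.
Import Order.TTheory GRing.Theory Num.Theory.
Local Open Scope ring_scope.
Local Open Scope classical_set_scope.

Section Defs.
Variable R : realType.

Definition is_prob_density (h : R -> R) : Prop :=
  measurable_fun setT h /\ (forall x, 0 <= h x) /\
  (\int[lebesgue_measure]_x (h x)%:E = 1)%E.

Definition H1 (h : R -> R) : Prop :=
  (forall x, h (- x) = h x) /\ (forall x, 0 < h x) /\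
  (forall x y, 0 <= x -> x <= y -> h y <= h x).

Definition H2 (h : R -> R) (c1 kappa : R) : Prop :=
  forall x, 0 <= x -> ln ((h x)^-1) <= c1 * (1 + ln (1 + x) `^ (1 + kappa)).

(* prior density of sigma * zeta, zeta ~ h *)
Definition prior_dens (h : R -> R) (sigma : R) (th : R) : R := (h (th / sigma)) / sigma.

(* likelihood of X = x given theta: N(theta, 1/n) density *)
Definition lik (n : nat) (th x : R) : R := normal_pdf th (Num.sqrt (n%:R))^-1 x.

Definition post_exp (h : R -> R) (sigma : R) (n : nat) (f : R -> R -> R) (x : R) : \bar R :=
  ((\int[lebesgue_measure]_th (f x th * lik n th x * prior_dens h sigma th)%:E) *
   (\int[lebesgue_measure]_th (lik n th x * prior_dens h sigma th)%:E)^-1)%E.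

Definition freq_exp (n : nat) (th0 : R) (g : R -> \bar R) : \bar R :=
  (\int[lebesgue_measure]_x ((lik n th0 x)%:E * g x))%E.

End Defs.

(* Main.v *)
Require Import Defs.
From HB Require Import structures.
From mathcomp Require Import all_boot all_order all_algebra.
From mathcomp Require Import all_classical all_reals all_analysis.
From mathcomp Require Import measurable_realfun lebesgue_integral_fubini normal_distribution.
From mathcomp.algebra_tactics Require Import ring lra.
Import Order.TTheory GRing.Theory Num.Theory.
Local Open Scope ring_scope.
Section helpers.
Context {R : realType}.
Local Open Scope classical_set_scope.
Local Notation mu := (@lebesgue_measure R).

Lemma meas_scale (s : R) : measurable_fun [set: R] (fun x : R => x / s).
Proof. exact: measurable_funM. Qed.

Lemma pushforward_scale (s : R) (s0 : 0 < s) (A : set R) : measurable A ->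
  pushforward mu (fun x : R => x / s) A = (s%:E * mu A)%E.
Proof.
move=> mA.
have si : 0 <= s^-1 by rewrite invr_ge0 ltW.
pose k : {nonneg R} := NngNum si.
have := @lebesgue_measure_unique R (mscale k (pushforward mu ((fun x : R => x / s) : _ -> measurableTypeR R) : {measure set _ -> \bar R})).
move=> /(_ (meas_scale s)) /(_ _ A mA) ->; last first.
  move=> _ [[a b]] _ <-.
  rewrite /pushforward /=; unfold mscale; simpl; rewrite [pushforward _ _ _]/pushforward.
  have -> : (fun x : R => x / s) @^-1` `]a, b] = `]a * s, b * s].
    by apply/seteqP; split => x /=; rewrite !in_itv/= (ltr_pdivlMr _ _ s0) (ler_pdivrMr _ _ s0).
  rewrite !lebesgue_measure_itv /= !lte_fin (ltr_pM2r s0).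
  case: ifP => _; last by rewrite mule0.
  by rewrite -!EFinD -EFinM -mulrBl mulrC mulfK ?gt_eqF.
rewrite /pushforward /=; unfold mscale; simpl; rewrite [pushforward _ _ _]/pushforward muleA -EFinM divff ?gt_eqF // mul1e.
done.
Qed.

Lemma integral_scale (s : R) (s0 : 0 < s) (f : R -> R) :
  measurable_fun setT f -> (forall x, 0 <= f x) ->
  (\int[mu]_x (f (x / s))%:E = s%:E * \int[mu]_x (f x)%:E)%E.
Proof.
move=> mf f0.
have := @ge0_integral_pushforward _ _ (measurableTypeR R) (measurableTypeR R) R (fun x : R => x / s)
  (meas_scale s) mu setT (EFin \o f) measurableT (proj2 (measurable_EFinP _ _) mf).
move=> /(_ (fun y _ => f0 y)); rewrite preimage_setT /= => <-.
have s0' : 0 <= s by exact: ltW.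
rewrite (@eq_measure_integral _ _ _ setT (mscale (NngNum s0') mu)); last first.
  by move=> ? B mB _; exact: pushforward_scale.
  exact: (meas_scale s).
rewrite ge0_integral_mscale //=.
- exact/measurable_EFinP.
- by move=> x _; rewrite lee_fin.
Qed.

Lemma le_integral_nm (f g : R -> \bar R) : (forall x, (0 <= f x)%E) ->
  (forall x, (f x <= g x)%E) -> (\int[mu]_x f x <= \int[mu]_x g x)%E.
Proof.
move=> f0 fg; have g0 x : (0 <= g x)%E by exact: le_trans (f0 x) (fg x).
rewrite !ge0_integralTE //; apply: ereal_sup_le => _ [k hk <-].
by exists k => //= x; exact: le_trans (hk x) (fg x).
Qed.

Lemma h_abs (h : R -> R) : H1 h -> forall y b, `|y| <= b -> h b <= h y.
Proof.
move=> [hs [hp hd]] y b yb.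
have -> : h y = h `|y|.
  by case: (ler0P y) => // y0; rewrite -hs.
exact: hd.
Qed.

Lemma integral_prior (h : R -> R) (s : R) : 0 < s -> is_prob_density h ->
  (\int[mu]_x (prior_dens h s x)%:E = 1)%E.
Proof.
move=> s0 [mh [h0 h1]].
under eq_integral do rewrite /prior_dens mulrC EFinM.
rewrite ge0_integralZl //=; last 3 first.
- apply/measurable_EFinP; apply: measurableT_comp => //; exact: meas_scale.
- by move=> x _; rewrite lee_fin.
- by rewrite lee_fin invr_ge0 ltW.
rewrite integral_scale // h1 mule1 -EFinM mulVf ?gt_eqF //.
Qed.

Lemma sqrt_n_gt0 (n : nat) : (1 <= n)%N -> 0 < Num.sqrt (n%:R : R).
Proof. by move=> n1; rewrite sqrtr_gt0 ltr0n. Qed.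

Lemma lik_E (n : nat) th x : (1 <= n)%N ->
  lik n th x = normal_peak (Num.sqrt (n%:R : R))^-1 *
     expR (- (x - th) ^+ 2 / (((Num.sqrt (n%:R : R))^-1) ^+ 2 *+ 2)).
Proof.
move=> n1; rewrite /lik normal_pdfE //.
by rewrite invr_eq0 gt_eqF // (sqrt_n_gt0 n n1).
Qed.

Lemma shift_E (n : nat) (t th x : R) : (1 <= n)%N ->
  expR (t * Num.sqrt n%:R * (th - x)) * lik n th x =
  expR (t ^+ 2 / 2) * normal_pdf (th - t * (Num.sqrt (n%:R : R))^-1) (Num.sqrt (n%:R : R))^-1 x.
Proof.
move=> n1; have q0 := sqrt_n_gt0 n n1.
rewrite lik_E // normal_pdfE; last by rewrite invr_eq0 gt_eqF.
rewrite /normal_fun mulrCA [RHS]mulrCA; congr (_ * _).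
rewrite -!expRD; congr expR.
set q := Num.sqrt (n%:R : R).
have qn : q != 0 by rewrite gt_eqF.
field.
exact: qn.
Qed.

Definition Fj (h : R -> R) (sg : R) (n : nat) (t : R) (z : R * R) : \bar R :=
  (expR (t * Num.sqrt n%:R * (z.2 - z.1)) * lik n z.2 z.1 * prior_dens h sg z.2)%:E.

Lemma Fj_ge0 h sg n t z : (forall x, 0 <= h x) -> 0 < sg -> (0 <= Fj h sg n t z)%E.
Proof.
move=> h0 s0; rewrite /Fj lee_fin; apply: mulr_ge0; last first.
  by rewrite /prior_dens divr_ge0 // ltW.
by apply: mulr_ge0; [exact: expR_ge0| exact: normal_pdf_ge0].
Qed.

Lemma measurable_Fj h sg n t : (1 <= n)%N -> measurable_fun setT h ->
  measurable_fun [set: (measurableTypeR R * measurableTypeR R)%type] (Fj h sg n t).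
Proof.
move=> n1 mh; apply/measurable_EFinP.
apply: measurable_funM; [apply: measurable_funM|].
- apply: measurableT_comp; first exact: measurable_expR.
  apply: measurable_funM => //; apply: measurable_funB.
  + exact: measurable_snd.
  + exact: measurable_fst.
- rewrite (_ : (fun z : R * R => lik n z.2 z.1) = (fun z => normal_peak (Num.sqrt (n%:R : R))^-1 *
     expR (- (z.1 - z.2) ^+ 2 / (((Num.sqrt (n%:R : R))^-1) ^+ 2 *+ 2)))); last first.
    by apply/funext => z; rewrite lik_E.
  apply: measurable_funM => //.
  apply: measurableT_comp; first exact: measurable_expR.
  apply: measurable_funM => //; apply: measurable_funN; apply: measurable_funX.
  apply: measurable_funB; [exact: measurable_fst| exact: measurable_snd].
- apply: measurable_funM => //.
  apply: measurableT_comp; first exact: mh.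
  apply: measurable_funM => //; exact: measurable_snd.
Qed.

Lemma integral_N h sg n t : (1 <= n)%N -> 0 < sg -> is_prob_density h ->
  (\int[mu]_x \int[mu]_th Fj h sg n t (x, th) = (expR (t ^+ 2 / 2))%:E)%E.
Proof.
move=> n1 s0 hp; have [mh [h0 h1]] := hp.
rewrite (@fubini_tonelli _ _ _ _ R mu mu (Fj h sg n t) (measurable_Fj h sg n t n1 mh)
  (fun z => Fj_ge0 h sg n t z h0 s0)).
have q0 := sqrt_n_gt0 n n1.
set s := (Num.sqrt (n%:R : R))^-1.
have sn0 : s != 0 by rewrite invr_eq0 gt_eqF.
transitivity (\int[mu]_th ((expR (t ^+ 2 / 2))%:E * (prior_dens h sg th)%:E))%E.
  apply: eq_integral => th _.
  under eq_integral do rewrite /Fj /= shift_E // mulrAC EFinM.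
  rewrite ge0_integralZl //=.
  - by rewrite integral_normal_pdf mule1 EFinM.
  - by apply/measurable_EFinP; exact: measurable_normal_pdf.
  - by move=> x _; rewrite lee_fin normal_pdf_ge0.
  - by rewrite lee_fin mulr_ge0 ?expR_ge0 // /prior_dens divr_ge0 // ltW.
rewrite ge0_integralZl //=.
- by rewrite integral_prior // mule1.
- apply/measurable_EFinP; apply: measurable_funM => //.
  apply: measurableT_comp => //; exact: meas_scale.
- by move=> x _; rewrite lee_fin /prior_dens divr_ge0 // ltW.
Qed.

Lemma lik_lb (n : nat) th th0 x : (1 <= n)%N ->
  (x - th) ^+ 2 <= (x - th0) ^+ 2 + ((Num.sqrt (n%:R : R))^-1) ^+ 2 ->
  expR (- (1/2)) * lik n th0 x <= lik n th x.
Proof.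
move=> n1 H; have q0 := sqrt_n_gt0 n n1.
set s := (Num.sqrt (n%:R : R))^-1 in H *.
have sn0 : s != 0 by rewrite invr_eq0 gt_eqF.
rewrite !lik_E // -/s mulrCA ler_wpM2l ?normal_peak_ge0 // -expRD ler_expR.
rewrite -subr_ge0.
have -> : - (x - th) ^+ 2 / (s ^+ 2 *+ 2) - (- (1 / 2) + - (x - th0) ^+ 2 / (s ^+ 2 *+ 2))
   = ((x - th0) ^+ 2 + s ^+ 2 - (x - th) ^+ 2) / (s ^+ 2 *+ 2).
  by field.
by rewrite divr_ge0 // ?subr_ge0 // mulrn_wge0 // sqr_ge0.
Qed.

Lemma D_lb (h : R -> R) (sg : R) (n : nat) (th0 x : R) : H1 h -> (1 <= n)%N -> 0 < sg ->
  (((expR (- (1/2)) * lik n th0 x * (h ((`|th0| + (Num.sqrt (n%:R : R))^-1) / sg) / sg))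
     * (Num.sqrt (n%:R : R))^-1)%:E <=
  \int[mu]_th (lik n th x * prior_dens h sg th)%:E)%E.
Proof.
move=> hH n1 s0; have q0 := sqrt_n_gt0 n n1.
set s := (Num.sqrt (n%:R : R))^-1.
have s_gt0 : 0 < s by rewrite invr_gt0.
set a := (`|th0| + s) / sg.
set c := expR (- (1/2)) * lik n th0 x * (h a / sg).
have [hs [hp hd]] := hH.
have c0 : 0 <= c.
  by rewrite mulr_ge0 ?divr_ge0 ?(ltW s0) ?(ltW (hp _)) // mulr_ge0 ?expR_ge0 ?normal_pdf_ge0.
pose l := if th0 <= x then th0 else th0 - s.
have Jp : forall th, l <= th <= l + s -> c <= lik n th x * prior_dens h sg th.
  move=> th /andP[lth thl].
  have th1 : `|th - th0| <= s.
    rewrite /l in lth thl; case: ifP lth thl => _ lth thl.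
      by rewrite ger0_norm ?subr_ge0 // lerBlDl.
    rewrite ler_norml; apply/andP; split; lra.
  rewrite /c /prior_dens; apply: ler_pM.
  - by rewrite mulr_ge0 ?expR_ge0 ?normal_pdf_ge0.
  - by rewrite divr_ge0 ?(ltW s0) ?(ltW (hp _)).
  - apply: lik_lb => //; rewrite -/s.
    have uv : 0 <= (x - th0) * (th - th0).
      rewrite /l in lth thl; case: ifP lth thl => H lth thl.
        by apply: mulr_ge0; rewrite subr_ge0.
      by apply: mulr_le0; rewrite subr_le0 //; [rewrite ltW // ltNge H | lra].
    have v2 : (th - th0) ^+ 2 <= s ^+ 2.
      rewrite -(real_normK (num_real (th - th0))); apply: lerXn2r; by rewrite ?nnegrE ?normr_ge0 ?(ltW s_gt0).
    have -> : (x - th) ^+ 2 = (x - th0) ^+ 2 + (th - th0) ^+ 2 - 2 * ((x - th0) * (th - th0)) by ring.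
    lra.
  - rewrite ler_pM2r ?invr_gt0 //; apply: h_abs => //.
    rewrite /a normrM (gtr0_norm (_ : 0 < sg^-1)) ?invr_gt0 // ler_pM2r ?invr_gt0 //.
    have -> : th = th0 + (th - th0) by rewrite addrC subrK.
    by rewrite (le_trans (ler_normD _ _)) // lerD2l.
pose J : set R := `[l, l + s]%classic.
have mJ : measurable J by exact: measurable_itv.
have E1 : (\int[mu]_th ((cst (c%:E)) \_ J) th)%E = (c * s)%:E.
  have mJv : (mu J = s%:E)%E.
    rewrite /J lebesgue_measure_itv /= lte_fin ltrDl s_gt0.
    by rewrite -EFinD addrAC subrr add0r.
  rewrite -integral_mkcond integral_cst //.
  transitivity (c%:E * mu J)%E; first by [].
  by rewrite mJv -EFinM.
rewrite -E1.
apply: le_integral_nm.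
  by move=> th; rewrite /patch; case: ifP => _ //; rewrite lee_fin.
move=> th; rewrite /patch; case: ifP => [/set_mem/= | _].
  by rewrite /J /= in_itv /= => /Jp; rewrite lee_fin.
by rewrite lee_fin; apply: mulr_ge0; [exact: normal_pdf_ge0| rewrite /prior_dens divr_ge0 ?(ltW s0) ?(ltW (hp _))].
Qed.
End helpers.

Local Notation mu := lebesgue_measure.

Theorem mainTheorem4 (R : realType) (h : R -> R) (c1 kappa : R) :
  is_prob_density h -> H1 h -> 0 < c1 -> 0 <= kappa -> H2 h c1 kappa ->
  exists C : R, 0 < C /\
    forall (n : nat) (t th0 sigma : R), (1 <= n)%N -> 0 < sigma ->
      (freq_exp n th0
         (post_exp h sigma n (fun x th => expR (t * Num.sqrt n%:R * (th - x))))
       <= (C * sigma * Num.sqrt n%:R * expR (t ^+ 2 / 2) *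
           expR (c1 * ln (1 + (`|th0| + (Num.sqrt n%:R)^-1) / sigma) `^ (1 + kappa)))%:E)%E.
Proof.
move=> hp hH c10 k0 H2h.
have [mh [h0 h1]] := hp.
have [hs [hpos hd]] := hH.
exists (expR (1/2) * expR c1); split; first by rewrite mulr_gt0 ?expR_gt0.
move=> n t th0 sg n1 s0.
have q0 : 0 < Num.sqrt (n%:R : R) := sqrt_n_gt0 n n1.
set q := Num.sqrt (n%:R : R).
set s := q^-1.
have s_gt0 : 0 < s by rewrite invr_gt0.
set a := (`|th0| + s) / sg.
have a0 : 0 <= a by rewrite /a divr_ge0 // ?addr_ge0 // ltW.
set P := ln (1 + a) `^ (1 + kappa).
set K := expR (1/2) * sg * q / h a.
have K0 : 0 <= K.
  apply: divr_ge0; last exact: ltW (hpos a).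
  by apply: mulr_ge0; [apply: mulr_ge0; [exact: expR_ge0|exact: ltW s0]|exact: ltW q0].
have mF := measurable_Fj h sg n t n1 mh.
have F0 := fun z => Fj_ge0 h sg n t z h0 s0.
have mN := @measurable_fun_fubini_tonelli_F _ _ _ _ R mu (Fj h sg n t) mF F0.
have step1 : (freq_exp n th0
         (post_exp h sg n (fun x th => expR (t * q * (th - x)))) <=
     \int[mu]_x (K%:E * \int[mu]_th Fj h sg n t (x, th)))%E.
  rewrite /freq_exp /post_exp.
  apply: (@le_integral_nm R
    (fun x => (lik n th0 x)%:E * ((\int[mu]_th (expR (t * q * (th - x)) * lik n th x * prior_dens h sg th)%:E) /
         \int[mu]_th (lik n th x * prior_dens h sg th)%:E))%E
    (fun x => K%:E * \int[mu]_th Fj h sg n t (x, th))%E).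
    move=> x; apply: mule_ge0; first by rewrite lee_fin normal_pdf_ge0.
    apply: mule_ge0; first by apply: integral_ge0 => th _; exact: (F0 (x, th)).
    rewrite inve_ge0; apply: integral_ge0 => th _.
    by rewrite lee_fin mulr_ge0 ?normal_pdf_ge0 // /prior_dens divr_ge0 // ltW.
  move=> x; rewrite /Fj /=.
  set N := (\int[mu]_th _)%E.
  set D := (\int[mu]_th _)%E.
  have N0 : (0 <= N)%E by apply: integral_ge0 => th _; exact: (F0 (x, th)).
  have Db := D_lb h sg n th0 x hH n1 s0.
  rewrite -/q -/s -/a -/D in Db.
  set L := lik n th0 x in Db *.
  have L0 : 0 < L.
    rewrite /L lik_E // mulr_gt0 ?expR_gt0 // normal_peak_gt0 //.
    by rewrite invr_eq0 gt_eqF.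
  set b := expR (- (1 / 2)) * L * (h a / sg) * s in Db.
  have b0 : 0 < b.
    by rewrite /b !mulr_gt0 ?expR_gt0 ?invr_gt0 ?hpos.
  have Dinv : (D^-1 <= (b^-1)%:E)%E.
    have -> : (b^-1)%:E = (b%:E)^-1%E by rewrite inver gt_eqF.
    rewrite lee_pV2 // inE /= ?lee_fin ?ltW //.
    by apply: (lt_le_trans _ Db); rewrite lte_fin.
  apply: (le_trans (lee_wpmul2l _ (lee_wpmul2l N0 Dinv))); first by rewrite lee_fin ltW.
  have KE : K = L * b^-1.
    rewrite /K /b /s.
    have ha0 : h a != 0 by rewrite gt_eqF ?hpos.
    have q0' : q != 0 by rewrite gt_eqF.
    have sg0 : sg != 0 by rewrite gt_eqF.
    have L0' : L != 0 by rewrite gt_eqF.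
    have e2 : expR (- (1 / 2)) = (expR (1/2))^-1 := expRN (1/2).
    have e0 : expR (1/2) != 0 :> R by rewrite gt_eqF ?expR_gt0.
    rewrite e2; field.
    by rewrite ha0 q0' sg0 L0' e0.
  have -> : (L%:E * (N * (b^-1)%:E) = (L * b^-1)%:E * N)%E.
    by rewrite muleCA muleC EFinM.
  by rewrite KE.
apply: (le_trans step1).
rewrite ge0_integralZl //; last first.
  by move=> x _; apply: integral_ge0 => th _; exact: F0.
rewrite integral_N // -EFinM lee_fin.
have hinv : (h a)^-1 <= expR c1 * expR (c1 * P).
  have Hl := H2h a a0; rewrite -/P in Hl.
  rewrite -[(h a)^-1]lnK; last by rewrite posrE invr_gt0 hpos.
  by rewrite -expRD ler_expR (le_trans Hl) // mulrDr mulr1.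
rewrite /K.
have -> : expR (1/2) * sg * q / h a * expR (t ^+ 2 / 2) =
  (expR (1/2) * sg * q * expR (t ^+ 2 / 2)) * (h a)^-1 by ring.
have -> : expR (1/2) * expR c1 * sg * q * expR (t ^+ 2 / 2) * expR (c1 * P) =
  (expR (1/2) * sg * q * expR (t ^+ 2 / 2)) * (expR c1 * expR (c1 * P)) by ring.
apply: ler_wpM2l => //.
by rewrite !mulr_ge0 ?expR_ge0 // ltW.
Qed.
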